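(* Let $\mathcal{CB}(\mathcal{C},\mathcal{W}_t,\mathcal{W}_r)$ be a cellular blind interference alignment problem under sufficient coherence and let $\mathcal{GIC}(\mathcal{W}_r,\overline{\mathcal{W}}_r)$ be the corresponding Gaussian index coding problem, i.e., with the same desired message sets $\mathcal{W}_r$ and $\overline{\mathcal{W}}_r=\bigcup_{t\in\mathcal{T}:\,c_{rt}=0}\mathcal{W}_t$ for every receiver $r$. Then the maximum DoF achievable through linear beamforming in the Gaussian index coding problem equals the maximum DoF achievable through linear beamforming in the cellular blind interference alignment problem.
   Context: CB problem: transmitters $\mathcal{T}$, receivers $\mathcal{R}$, independent messages $\mathcal{W}$; transmitter $t$ holds $\mathcal{W}_t$ (pairwise disjoint, union $\mathcal{W}$); receiver $r$ desires $\mathcal{W}_r$; fixed connectivity $c_{rt}\in\{0,1\}$, $\mathcal{C}=\{(r,t):c_{rt}=1\}$. Single-antenna nodes; receiver $r$ observes $Y_r(n)=\sum_t c_{rt}H_{rt}(n)X_t(n)+Z_r(n)$ with unit-variance circularly symmetric complex Gaussian noise, power constraint $P$, nonzero channel coefficients (magnitudes bounded away from $0$ and $\infty$) known to the receiver for connected transmitters and unknown to transmitters (no CSIT). Sufficient coherence: the network coherence time may be taken as large as needed, so that all channel coefficients are constant over the $T$ channel uses of any scheme considered. GIC problem: one single-antenna transmitter knowing all messages, receiver $r$ observes $Y_r(n)=X(n)+Z_r(n)$, knows $\overline{\mathcal{W}}_r$ a priori, desires $\mathcal{W}_r$. Linear beamforming over $T$ channel uses: each message $W$ is assigned $d_W$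 information symbols sent along the columns of a $T\times d_W$ complex beamforming matrix $V_W$ (not depending on channel realizations), the transmitted signals of all messages being linearly superimposed (in CB, each message is sent by the transmitter where it originates). At receiver $r$, the interfering messages are those neither desired nor known a priori (in GIC: not in $\mathcal{W}_r\cup\overline{\mathcal{W}}_r$; in CB: messages from transmitters $t$ with $c_{rt}=1$ not in $\mathcal{W}_r$), and the scheme is feasible if at every receiver the columns of the (received, channel-scaled) beamforming matrices of its desired messages are linearly independent of each other and of the span of the received beamforming columns of its interfering messages. The DoF of such a scheme is $\sum_W d_W/T$; the maximum linear-beamforming DoF is the supremum over $T$ and feasible schemes. *)

(* Defs.v *)
From HB Require Import structures.
From mathcomp Require Import all_boot all_order all_algebra.
From mathcomp Require Import complex.
From mathcomp Require Import boolp classical_sets reals constructive_ereal ereal.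
Set Implicit Arguments. Unset Strict Implicit. Unset Printing Implicit Defensive.
Import Order.TTheory GRing.Theory Num.Theory.
Local Open Scope ring_scope.

Notation Cplx R := (complex R).

Section LinearBF.
Variables (R : realType) (M Rx : finType).
(* M : the messages;  Rx : the receivers. *)

(* A linear beamforming scheme over Tn channel uses: message W carries d W
   information symbols, sent along the columns of the Tn x (d W) matrix V W. *)

(* Generic per-receiver feasibility: [recv W] is the received (channel-scaled)
   beamforming matrix of message W at the receiver; [desired W] / [interf W]
   select the desired / interfering messages.  Feasible iff no nontrivial
   linear combination of the received columns of the desired messages lies in
   the span of the received columns of the interfering messages (i.e. the
   desired columns are linearly independent of each other and of that span). *)
Definition rx_feasible (Tn : nat) (d : M -> nat)
    (recv : forall W : M, 'M[Cplx R]_(Tn, d W))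
    (desired interf : pred M) : Prop :=
  forall a : forall W : M, 'cV[Cplx R]_(d W),
    (((\sum_(W | desired W) recv W *m a W)^T)
       <= \sum_(W | interf W) <<(recv W)^T>>)%MS ->
    forall W, desired W -> a W = 0.

(* des r W : receiver r desires W;  known r W : W belongs to Wbar_r. *)
Definition GIC_interf (des known : Rx -> pred M) (r : Rx) : pred M :=
  fun W => ~~ des r W && ~~ known r W.

Definition GIC_feasible (des known : Rx -> pred M) (Tn : nat) (d : M -> nat)
    (V : forall W : M, 'M[Cplx R]_(Tn, d W)) : Prop :=
  forall r : Rx, rx_feasible V (des r) (GIC_interf des known r).

Variable Tx : finType.
(* src W : the transmitter holding W (the W_t are disjoint with union W);
   c r t : connectivity c_rt;  h r t : channel coefficient H_rt (constant over
   the Tn channel uses by sufficient coherence). *)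
Definition CB_recv (src : M -> Tx) (c : Rx -> Tx -> bool)
    (h : Rx -> Tx -> Cplx R) (r : Rx) (Tn : nat) (d : M -> nat)
    (V : forall W : M, 'M[Cplx R]_(Tn, d W)) : forall W : M, 'M[Cplx R]_(Tn, d W) :=
  fun W => ((c r (src W))%:R * h r (src W)) *: V W.

Definition CB_interf (src : M -> Tx) (c : Rx -> Tx -> bool) (des : Rx -> pred M)
    (r : Rx) : pred M :=
  fun W => c r (src W) && ~~ des r W.

(* The beamformers do not depend on the channel (no CSIT): a scheme is
   feasible if it is feasible at every receiver for every realization of the
   nonzero channel coefficients. *)
Definition CB_feasible (src : M -> Tx) (c : Rx -> Tx -> bool) (des : Rx -> pred M)
    (Tn : nat) (d : M -> nat) (V : forall W : M, 'M[Cplx R]_(Tn, d W)) : Prop :=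
  forall h : Rx -> Tx -> Cplx R, (forall r t, h r t != 0) ->
  forall r : Rx, rx_feasible (CB_recv src c h r V) (des r) (CB_interf src c des r).

Definition lin_DoF_set (feas : forall Tn (d : M -> nat),
      (forall W : M, 'M[Cplx R]_(Tn, d W)) -> Prop) : set R :=
  [set x | exists Tn (d : M -> nat) (V : forall W : M, 'M[Cplx R]_(Tn, d W)),
     [/\ (0 < Tn)%N, feas Tn d V & x = (\sum_W d W)%:R / Tn%:R]].

Definition max_lin_DoF feas : \bar R :=
  ereal_sup [set x%:E | x in lin_DoF_set feas].

End LinearBF.

(* Main.v *)
Require Import Defs.
From HB Require Import structures.
From mathcomp Require Import all_boot all_order all_algebra.
From mathcomp Require Import complex.
From mathcomp Require Import boolp classical_sets reals constructive_ereal ereal.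
Local Open Scope ring_scope.
Import GRing.Theory.

Lemma scale_feas (R : realType) (M : finType) (Tn : nat) (d : M -> nat)
  (V : forall W : M, 'M[Cplx R]_(Tn, d W)) (k : M -> Cplx R)
  (des interf : pred M)
  (hk : forall W, des W || interf W -> k W != 0) :
  rx_feasible V des interf <-> rx_feasible (fun W => k W *: V W) des interf.
Proof.
have Hint : (\sum_(W | interf W) <<(k W *: V W)^T>>)%MS
          = (\sum_(W | interf W) <<(V W)^T>>)%MS.
  apply: eq_bigr => W hW; apply: eq_genmx.
  rewrite linearZ /=; apply: eqmx_scale; apply: hk; by rewrite hW orbT.
split=> H a.
- rewrite Hint => Ha W dW.
  have := H (fun W => k W *: a W).
  have -> : \sum_(W | des W) V W *m (k W *: a W)
          = \sum_(W | des W) (k W *: V W) *m a W.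
    by apply: eq_bigr => W' _; rewrite -scalemxAr scalemxAl.
  move=> /(_ Ha W dW) /eqP; rewrite scaler_eq0 => /orP [|/eqP //].
  by move=> /eqP hk0; move: (hk W); rewrite dW /= hk0 eqxx => /(_ isT).
- rewrite -Hint => Ha W dW.
  have := H (fun W => (k W)^-1 *: a W).
  have -> : \sum_(W | des W) (k W *: V W) *m ((k W)^-1 *: a W)
          = \sum_(W | des W) V W *m a W.
    apply: eq_bigr => W' dW'.
    rewrite -scalemxAr -scalemxAl scalerA mulVf ?scale1r //.
    by apply: hk; rewrite dW'.
  move=> /(_ Ha W dW) /eqP; rewrite scaler_eq0 => /orP [|/eqP //].
  by rewrite invr_eq0 => /eqP hk0; move: (hk W); rewrite dW /= hk0 eqxx => /(_ isT).
Qed.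

Theorem theorem9 (R : realType) (Tx Rx M : finType)
  (c : Rx -> Tx -> bool) (src : M -> Tx) (des : Rx -> pred M)
  (hdes : forall r W, des r W -> c r (src W)) :
  max_lin_DoF (fun Tn d V =>
      @GIC_feasible R M Rx des (fun r W => ~~ c r (src W)) Tn d V)
  = max_lin_DoF (fun Tn d V => @CB_feasible R M Rx Tx src c des Tn d V).
Proof.
have key : forall Tn d (V : forall W : M, 'M[Cplx R]_(Tn, d W)),
    @GIC_feasible R M Rx des (fun r W => ~~ c r (src W)) Tn d V <->
    @CB_feasible R M Rx Tx src c des Tn d V.
  move=> Tn d V.
  have Ei : forall r, GIC_interf des (fun r W => ~~ c r (src W)) r
                      = CB_interf src c des r.
    move=> r; rewrite /GIC_interf /CB_interf /=.
    by apply: funext => W; rewrite negbK andbC.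
  have hc : forall r W, des r W || CB_interf src c des r W -> c r (src W).
    by move=> r W /orP [/hdes //| /andP []].
  split.
  - move=> H h hh r; rewrite /CB_recv.
    have hk : forall W, des r W || CB_interf src c des r W ->
        (c r (src W))%:R * h r (src W) != 0.
      by move=> W /hc ->; rewrite mul1r.
    refine (proj1 (@scale_feas _ _ _ _ V _ _ _ hk) _).
    by rewrite -Ei; apply: H.
  - move=> H r; rewrite Ei.
    have := H (fun _ _ => 1) (fun _ _ => oner_neq0 _) r.
    rewrite /CB_recv.
    have hk : forall W, des r W || CB_interf src c des r W ->
        (c r (src W))%:R * (1 : Cplx R) != 0.
      by move=> W /hc ->; rewrite mul1r oner_neq0.
    exact: (proj2 (@scale_feas _ _ _ _ V _ _ _ hk)).
have E : lin_DoF_set (fun Tn d V =>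
      @GIC_feasible R M Rx des (fun r W => ~~ c r (src W)) Tn d V)
  = lin_DoF_set (fun Tn d V => @CB_feasible R M Rx Tx src c des Tn d V).
  apply/seteqP; split=> x [Tn [d [V [h1 h2 h3]]]];
    exists Tn, d, V; split => //; by apply/key.
by rewrite /max_lin_DoF E.
Qed.
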